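(* Let $s=a_1\cdots a_n$ be a permutation of $[n]$ in one-line form with $s\neq 12\cdots n$, write $\bar s_0=0$ and $\bar s_r=a_r$ for $1\le r\le n$, and let $\bar s=(\bar s_0,\bar s_1,\ldots,\bar s_n)$ as an $(n+1)$-cycle on $[n]^*=\{0,1,\ldots,n\}$. Let $\pi$ be the permutation of $[n]^*$ such that the plane permutation $(\bar s,\pi)$ has diagonal $\bar s\circ\pi^{-1}=p_t^{-1}$, where $p_t=(n,n-1,\ldots,1,0)$ (equivalently $\pi=p_t\bar s$). Then there exist indices $0\le i-1<j<k-1\le l\le n$ such that $$\pi(\bar s_{i-1})=\bar s_{k-1},\qquad \pi(\bar s_l)=\bar s_j.$$
   Context: Permutations are multiplied as composition of maps, $(\sigma\tau)(x)=\sigma(\tau(x))$. A plane permutation on a finite set is a pair $(s,\pi)$ with $s$ a cycle through all elements (written with a fixed starting element) and $\pi$ any permutation; its diagonal is $s\circ\pi^{-1}$. Note $p_t^{-1}=(0,1,2,\ldots,n)$. *)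

(* Defs.v *)
From mathcomp Require Import all_boot all_fingroup.
Set Implicit Arguments. Unset Strict Implicit. Unset Printing Implicit Defensive.

(* A permutation s = a_1 ... a_n of [n] = {1..n} is encoded as s : 'S_n acting
   on 'I_n = {0..n-1}, with a_r = (s (r-1)).+1 for 1 <= r <= n. *)

Definition sbar_at (n : nat) (s : 'S_n) (r : nat) : nat :=
  match r with
  | 0 => 0
  | r'.+1 => match @insub nat (fun x => x < n) _ r' with
             | Some i => (s i).+1
             | None => 0
             end
  end.

Definition sbar_seq (n : nat) (s : 'S_n) : seq nat := [seq sbar_at s r | r <- iota 0 n.+1].

Definition sbar_cyc (n : nat) (s : 'S_n) (x : nat) : nat := next (sbar_seq s) x.

Definition pt (n : nat) (x : nat) : nat := next (rev (iota 0 n.+1)) x.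

Definition pi_plane (n : nat) (s : 'S_n) (x : nat) : nat := pt n (sbar_cyc s x).

(* Main.v *)
Require Import Defs.
From mathcomp Require Import all_boot all_fingroup.
From mathcomp Require Import zify.
Set Implicit Arguments. Unset Strict Implicit.
Lemma next_cons_nth (T : eqType) (y0 : T) p r :
  uniq (y0 :: p) -> r <= size p ->
  next (y0 :: p) (nth y0 (y0 :: p) r) = nth y0 p r.
Proof.
move=> U hr; rewrite next_nth mem_nth ?ltnS // index_uniq // ltnS.
Qed.

Lemma pt_val n x : x <= n -> pt n x = if x == 0 then n else x.-1.
Proof.
move=> hx; rewrite /pt next_rev ?iota_uniq // prev_nth mem_iota /= ltnS hx.
case: x hx => [|x] hx /=.
  rewrite memNindex ?mem_iota // size_iota.
  by rewrite -[nth 0 _ n]/(nth 0 (iota 0 n.+1) n) nth_iota.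
have -> : x.+1 = nth 0 (iota 1 n) x by rewrite nth_iota.
rewrite index_uniq ?iota_uniq ?size_iota //.
by rewrite -[nth 0 _ x]/(nth 0 (iota 0 n.+1) x) nth_iota // ltnW.
Qed.
Lemma comb n (y pos : nat -> nat) :
  y n.+1 = n.+1 -> pos 0 = 0 -> pos n.+1 = n.+1 ->
  (forall v, v <= n.+1 -> pos v <= n.+1 /\ y (pos v) = v) ->
  (exists v, v <= n.+1 /\ pos v != v) ->
  exists u t, [/\ 1 <= u, u <= t, t <= n, pos u <= pos t &
     pos t < pos u.-1 < pos t.+1].
Proof.
move=> yn p0 pn yp [v0 [hv0 nv0]].
have pinj : forall a b, a <= n.+1 -> b <= n.+1 -> pos a = pos b -> a = b.
  move=> a b ha hb e; have [_ <-] := yp a ha; have [_ <-] := yp b hb.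
  by rewrite e.
have pleq : forall v, v <= n -> pos v <= n.
  move=> v hv; have [h1 h2] := yp v (leqW hv).
  case: (eqVneq (pos v) n.+1) => e; last by lia.
  by move: h2; rewrite e yn => ev; move: hv; rewrite -ev ltnn.
have exd : exists u, (0 < u <= n.+1) && (pos u < pos u.-1).
  case: (boolP [exists u : 'I_n.+2, (0 < u <= n.+1) && (pos u < pos (u : nat).-1)]).
    by case/existsP=> u hu; exists u.
  move/existsPn=> H; exfalso.
  have H' : forall u, 0 < u <= n.+1 -> pos u.-1 < pos u.
    move=> u /andP[u0 un]; have := H (Ordinal (un : u < n.+2)).
    rewrite /= u0 un /= -leqNgt leq_eqVlt => /orP[/eqP e|//].
    by have := pinj _ _ (leq_trans (leq_pred u) un) un e; case: (u) u0 => //= ? _ /n_Sn.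
  have lo : forall v, v <= n.+1 -> v <= pos v.
    elim=> [|v IH] hv //; have := H' v.+1; rewrite hv /= => /(_ isT).
    by have := IH (ltnW hv); lia.
  have hi : forall d, d <= n.+1 -> pos (n.+1 - d) <= n.+1 - d.
    elim=> [|d IH] hd; first by rewrite subn0 pn.
    have := H' (n.+1 - d); have := IH (ltnW hd).
    have -> : (n.+1 - d).-1 = n.+1 - d.+1 by lia.
    move=> a b; have : 0 < n.+1 - d <= n.+1 by lia.
    by move/b; lia.
  have := lo v0 hv0; have := hi (n.+1 - v0) (leq_subr _ _).
  rewrite subKn //; move: nv0; lia.
have ubd : forall u, (0 < u <= n.+1) && (pos u < pos u.-1) -> u <= n.+1.
  by move=> u /andP[/andP[]]. 
case: (ex_maxnP exd ubd) => u /andP[/andP[u0 un] du] umax.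
have mono : forall d v, u <= v -> v + d <= n.+1 -> pos v <= pos (v + d).
  elim=> [|d IH] v uv hv; first by rewrite addn0.
  apply: leq_trans (IH v uv (ltnW (leq_trans _ hv))) _; first by rewrite addnS.
  rewrite addnS; case: (boolP (pos (v + d).+1 < pos (v + d).+1.-1)) => c.
    have : (0 < (v + d).+1 <= n.+1) && (pos (v + d).+1 < pos (v + d).+1.-1).
      by rewrite c andbT; apply/andP; split; lia.
    by move/umax; lia.
  move: c; rewrite -leqNgt /= leq_eqVlt => /orP[/eqP e|/ltnW //].
  have : v + d <= n.+1 by lia.
  have : (v + d).+1 <= n.+1 by lia.
  move=> h1 h2; have := pinj _ _ h2 h1 e; lia.
have pu1 : pos u.-1 <= n by apply: pleq; lia.
have ext : exists t, (u <= t <= n.+1) && (pos t < pos u.-1).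
  by exists u; rewrite leqnn un du.
have ubt : forall t, (u <= t <= n.+1) && (pos t < pos u.-1) -> t <= n.+1.
  by move=> t /andP[/andP[]]. 
case: (ex_maxnP ext ubt) => t /andP[/andP[ut tn] dt] tmax.
have tn' : t <= n.
  case: (eqVneq t n.+1) => e; last by lia.
  by move: dt; rewrite e pn; lia.
exists u, t; split => //.
  by have := mono (t - u) u (leqnn _); rewrite subnKC //; apply; lia.
rewrite dt /=.
have := tmax t.+1; rewrite ltnS ltnn (leq_trans ut (leqnSn _)) tn' /=.
move=> h; have {}h : ~~ (pos t.+1 < pos u.-1) by apply/negP => /h.
rewrite -leqNgt leq_eqVlt in h; case/orP: h => [/eqP e|//].
have := pinj _ _ (leq_trans (leq_pred u) un) (tn' : t.+1 <= n.+1) e; lia.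
Qed.

Lemma sbarS n (s : 'S_n) (i : 'I_n) : sbar_at s (val i).+1 = (s i).+1.
Proof. rewrite /= insubT; first exact: ltn_ord. move=> H /=. have -> : (Sub (val i) H : 'I_n) = i by apply: val_inj. by []. Qed.

Lemma sbar_le n (s : 'S_n) r : sbar_at s r <= n.
Proof.
case: r => [|r] //=; case: insubP => [i _ _|_] //.
Qed.

Lemma sbar_inj n (s : 'S_n) a b : a <= n -> b <= n -> sbar_at s a = sbar_at s b -> a = b.
Proof.
case: a => [|a] ha; case: b => [|b] hb //.
- by rewrite -[b]/(val (Ordinal hb)) sbarS.
- by rewrite -[a]/(val (Ordinal ha)) sbarS.
rewrite -[a]/(val (Ordinal ha)) -[b]/(val (Ordinal hb)) !sbarS.
by case => /val_inj /(can_inj (permK s)) /(congr1 val) /= ->.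
Qed.

Lemma pi_val n (s : 'S_n) r : r <= n ->
  pi_plane s (sbar_at s r) = (if r < n then sbar_at s r.+1 else n.+1).-1.
Proof.
move=> hr.
have e : sbar_at s r = nth 0 (sbar_seq s) r.
  by rewrite /sbar_seq (nth_map 0) ?size_iota ?ltnS // nth_iota.
have U : uniq (sbar_seq s).
  rewrite /sbar_seq map_inj_in_uniq ?iota_uniq //.
  by move=> a b; rewrite !mem_iota !add0n !ltnS => /andP[_ ha] /andP[_ hb]; apply: sbar_inj.
rewrite /pi_plane /sbar_cyc e.
rewrite -[sbar_seq s]/(0 :: map (sbar_at s) (iota 1 n)) next_cons_nth //; last by rewrite size_map size_iota.
case: ltnP => hrn.
  rewrite (nth_map 0) ?size_iota // nth_iota // add1n pt_val ?sbar_le //.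
  by rewrite -[r]/(val (Ordinal hrn)) sbarS.
by rewrite nth_default ?size_map ?size_iota // pt_val.
Qed.

Theorem lemma5 (n : nat) (s : 'S_n) :
  s != 1%g ->
  exists i j k l : nat,
    [/\ 1 <= i, i - 1 < j, j < k - 1, k - 1 <= l & l <= n]%N /\
    pi_plane s (sbar_at s (i - 1)) = sbar_at s (k - 1) /\
    pi_plane s (sbar_at s l) = sbar_at s j.
Proof.
case: n s => [|m] s hs.
  by case/eqP: hs; apply/permP => -[].
pose n := m.+1.
pose y r := if r <= n then sbar_at s r else n.+1.
pose pos v := if v == 0 then 0 else if v <= n then (val (s^-1%g (inord v.-1))).+1 else n.+1.
have yn : y n.+1 = n.+1 by rewrite /y ltnn.
have p0 : pos 0 = 0 by [].
have pn : pos n.+1 = n.+1 by rewrite /pos ltnn.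
have yp : forall v, v <= n.+1 -> pos v <= n.+1 /\ y (pos v) = v.
  move=> v hv; rewrite /pos; case: eqP => [->|v0]; first by [].
  case: (leqP v n) => hvn; last first.
    have ev : v = n.+1 by apply/eqP; rewrite eqn_leq hv hvn.
    by rewrite ev; split.
  have hp : (val (s^-1%g (inord v.-1))).+1 <= n by exact: ltn_ord.
  split; first exact: leqW.
  rewrite /y hp sbarS permKV inordK; first by case: (v) v0.
  by case: (v) v0 hvn.
have nt : exists v, v <= n.+1 /\ pos v != v.
  case: (boolP [exists v : 'I_n.+2, pos v != v]).
    by case/existsP => v hv; exists v; rewrite -ltnS ltn_ord.
  move/existsPn => H; case/eqP: hs; apply/permP => i; rewrite perm1.
  have := H (inord i.+1); rewrite negbK inordK; last by rewrite !ltnS ltnW.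
  rewrite /pos /= ltn_ord inord_val => /eqP [e].
  have e' : s^-1%g i = i by apply: val_inj.
  by rewrite -{1}e' permKV.
have [u [t [u1 ut tn put /andP[h1 h2]]]] := comb yn p0 pn yp nt.
have [pu1 ypu1] := yp u.-1 (leq_trans (leq_pred u) (leq_trans ut (leqW tn))).
have [pu ypu] := yp u (leq_trans ut (leqW tn)).
have [pt1 ypt1] := yp t.+1 tn.
have [ptt ypt] := yp t (leqW tn).
have pu0 : 0 < pos u by move: ypu; case: (pos u) => //= e; move: u1; rewrite -e.
have pu1n : pos u.-1 <= n.
  case: (eqVneq (pos u.-1) n.+1) => e; last by lia.
  by move: ypu1; rewrite e yn; lia.
have ptn : pos t <= n.
  case: (eqVneq (pos t) n.+1) => e; last by lia.
  by move: ypt; rewrite e yn; lia.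
exists (pos u), (pos t), (pos u.-1).+1, (pos t.+1).-1.
split; first by split; lia.
rewrite !subn1 /=.
split.
  rewrite pi_val; last by lia.
  have -> : (if (pos u).-1 < n then sbar_at s (pos u).-1.+1 else n.+1) = y (pos u).
    by rewrite /y prednK //; lia.
  by rewrite ypu -{1}ypu1 /y pu1n.
rewrite pi_val; last by lia.
have -> : (if (pos t.+1).-1 < n then sbar_at s (pos t.+1).-1.+1 else n.+1) = y (pos t.+1).
  by rewrite /y prednK //; lia.
by rewrite ypt1 /= -{1}ypt /y ptn.
Qed.
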